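(* Let $(R,\mathfrak m)$ be a regular local ring with $\dim R\ge 2$, let $\{(R_i,\mathfrak m_i)\}_{i\ge 0}$ be an infinite sequence of local quadratic transforms with $R_0=R$, and let $S=\bigcup_{i\ge0}R_i$. The following are equivalent: (1) $S$ is dominated by a DVR; (2) $S$ is a DVR; (3) $S$ is a Noetherian ring.
   Context: A local quadratic transform of a regular local ring $(A,\mathfrak n)$ is a local ring $A[\mathfrak n/x]_{\mathfrak q}$ with $x\in\mathfrak n\setminus\mathfrak n^2$ and $\mathfrak q$ a prime ideal of $A[\mathfrak n/x]$ containing $\mathfrak n$. The sequence satisfies: for each $i\ge 0$, $R_{i+1}$ is a local quadratic transform of $R_i$, $R_i\subsetneq R_{i+1}$, and each $R_i$ is a regular local ring of dimension at least $2$ with maximal ideal $\mathfrak m_i$. $S$ is local with maximal ideal $\bigcup_i\mathfrak m_i$; a local ring $(D,\mathfrak M_D)$ dominates $S$ if $S\subseteq D$ and $\mathfrak M_D\cap S$ is the maximal ideal of $S$. *)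

(* Defs.v *)
(* Subrings of a field K are represented as predicates K -> Prop. *)
From mathcomp Require Import all_boot all_order all_algebra.
Set Implicit Arguments. Unset Strict Implicit. Unset Printing Implicit Defensive.
Import GRing.Theory.
Local Open Scope ring_scope.

Section CommAlg.
Variable K : fieldType.
Implicit Types (A B I P : K -> Prop).

Definition is_subring A :=
  A 0 /\ A 1 /\ (forall x y, A x -> A y -> A (x - y)) /\
  (forall x y, A x -> A y -> A (x * y)).

Definition is_ideal A I :=
  (forall x, I x -> A x) /\ I 0 /\ (forall x y, I x -> I y -> I (x + y)) /\
  (forall a x, A a -> I x -> I (a * x)).

Definition ideal_gen A (s : seq K) : K -> Prop :=
  fun x => exists c : nat -> K, (forall i, A (c i)) /\
    x = \sum_(i < size s) c i * s`_i.

Definition noetherian A :=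
  is_subring A /\
  forall I, is_ideal A I -> exists s : seq K, forall x, I x <-> ideal_gen A s x.

Definition principal_ideal_ring A :=
  forall I, is_ideal A I -> exists g : K, forall x, I x <-> ideal_gen A [:: g] x.

Definition is_prime A P :=
  is_ideal A P /\ ~ P 1 /\ (forall x y, A x -> A y -> P (x * y) -> P x \/ P y).

(* non-units of A; for a local ring this is its maximal ideal *)
Definition nonunits A : K -> Prop := fun x => A x /\ ~ (x != 0 /\ A x^-1).

Definition is_local A := is_subring A /\ is_ideal A (nonunits A).

Definition has_prime_chain A (n : nat) :=
  exists P : nat -> K -> Prop,
    (forall i, (i <= n)%N -> is_prime A (P i)) /\
    (forall i, (i < n)%N -> (forall x, P i x -> P i.+1 x) /\ exists x, P i.+1 x /\ ~ P i x).

Definition krull_dim A (d : nat) := has_prime_chain A d /\ ~ has_prime_chain A d.+1.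

Definition regular_local_dim A (d : nat) :=
  noetherian A /\ is_local A /\ krull_dim A d /\
  exists s : seq K, size s = d /\ forall x, nonunits A x <-> ideal_gen A s x.

Definition max_sq A : K -> Prop :=
  fun x => exists (k : nat) (f g : nat -> K),
    (forall i, nonunits A (f i) /\ nonunits A (g i)) /\ x = \sum_(i < k) f i * g i.

(* the ring A[n/x]: smallest subring of K containing A and all a/x, a in n *)
Definition blowup_ring A (x : K) : K -> Prop :=
  fun y => forall C, is_subring C -> (forall a, A a -> C a) ->
    (forall a, nonunits A a -> C (a / x)) -> C y.

Definition localization B (q : K -> Prop) : K -> Prop :=
  fun y => exists b c, B b /\ B c /\ ~ q c /\ y = b / c.

Definition local_quadratic_transform A A' :=
  exists x, nonunits A x /\ ~ max_sq A x /\
  exists q, is_prime (blowup_ring A x) q /\ (forall a, nonunits A a -> q a) /\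
    forall y, A' y <-> localization (blowup_ring A x) q y.

(* discrete valuation ring: a local principal ideal domain that is not a field *)
Definition is_DVR A :=
  is_local A /\ principal_ideal_ring A /\ exists x, nonunits A x /\ x != 0.

End CommAlg.

Definition dominated_by_DVR (K : fieldType) (S : K -> Prop) :=
  exists (L : fieldType) (f : {rmorphism K -> L}) (D : L -> Prop),
    is_DVR D /\ (forall x, S x -> D (f x)) /\
    (forall x, S x -> (nonunits D (f x) <-> nonunits S x)).

(* Main.v *)
Require Import Defs.
From mathcomp Require Import all_boot all_order all_algebra.
From mathcomp Require Import ring.
From Stdlib Require Import Classical IndefiniteDescription.
Set Implicit Arguments. Unset Strict Implicit. Unset Printing Implicit Defensive.
Import GRing.Theory.
Local Open Scope ring_scope.

Lemma sr0 (F : fieldType) (A : F -> Prop) : is_subring A -> A 0.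
Proof. by case. Qed.
Lemma sr1 (F : fieldType) (A : F -> Prop) : is_subring A -> A 1.
Proof. by case=> _ []. Qed.
Lemma srB (F : fieldType) (A : F -> Prop) x y : is_subring A -> A x -> A y -> A (x - y).
Proof. by case=> _ [_ []] H _; apply: H. Qed.
Lemma srM (F : fieldType) (A : F -> Prop) x y : is_subring A -> A x -> A y -> A (x * y).
Proof. by case=> _ [_ []] _ H; apply: H. Qed.
Lemma srD (F : fieldType) (A : F -> Prop) x y : is_subring A -> A x -> A y -> A (x + y).
Proof.
move=> HA Hx Hy; have -> : x + y = x - (0 - y) by rewrite sub0r opprK.
by apply: srB => //; apply: srB => //; apply: sr0.
Qed.
Lemma srX (F : fieldType) (A : F -> Prop) x n : is_subring A -> A x -> A (x ^+ n).
Proof.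
move=> HA Hx; elim: n => [|n IH]; first by rewrite expr0; apply: sr1.
by rewrite exprS; apply: srM.
Qed.

Lemma ideal_gen1 (F : fieldType) (A : F -> Prop) g x :
  ideal_gen A [:: g] x <-> exists c, A c /\ x = c * g.
Proof.
split.
- by case=> c [Hc ->]; exists (c 0%N); split => //; rewrite big_ord1.
- by case=> c [Hc ->]; exists (fun _ => c); split => //; rewrite big_ord1.
Qed.

Lemma gen_in (F : fieldType) (A : F -> Prop) (s : seq F) j :
  is_subring A -> (j < size s)%N -> ideal_gen A s s`_j.
Proof.
move=> HA Hj; exists (fun i => if i == j then 1 else 0); split.
  by move=> i; case: (i == j); [apply: sr1|apply: sr0].
rewrite (bigD1 (Ordinal Hj)) //= eqxx mul1r big1 ?addr0 //.
by move=> i; rewrite -val_eqE /= => /negbTE ->; rewrite mul0r.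
Qed.

Lemma acc (F : fieldType) (A : F -> Prop) (a : nat -> F) :
  is_subring A ->
  (forall I, is_ideal A I -> exists s, forall x, I x <-> ideal_gen A s x) ->
  (forall k, A (a k)) -> (forall k, exists c, A c /\ a k = c * a k.+1) ->
  exists N, forall m, exists e, A e /\ a m = e * a N.
Proof.
move=> HA Hn Ha Hc.
have mono : forall k n, exists c, A c /\ a k = c * a (k + n)%N.
  move=> k; elim=> [|n [c [Hc1 Hc2]]].
    by exists 1; split; [apply: sr1|rewrite addn0 mul1r].
  have [c' [Hc'1 Hc'2]] := Hc (k + n)%N.
  exists (c * c'); split; first by apply: srM.
  by rewrite Hc2 Hc'2 mulrA addnS.
have monol : forall k m, (k <= m)%N -> exists c, A c /\ a k = c * a m.
  by move=> k m Hkm; have := mono k (m - k)%N; rewrite subnKC.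
pose J := fun y => exists k e, A e /\ y = e * a k.
have HJ : is_ideal A J.
  split; [|split; [|split]].
  - by move=> y [k [e [He ->]]]; apply: srM.
  - by exists 0%N, 0; split; [apply: sr0|rewrite mul0r].
  - move=> x y [k1 [e1 [He1 ->]]] [k2 [e2 [He2 ->]]].
    have [c1 [Hd1 E1]] := monol k1 (maxn k1 k2) (leq_maxl _ _).
    have [c2 [Hd2 E2]] := monol k2 (maxn k1 k2) (leq_maxr _ _).
    exists (maxn k1 k2), (e1 * c1 + e2 * c2); split.
      by apply: srD => //; apply: srM.
    by rewrite E1 E2 mulrDl !mulrA.
  - move=> b x Hb [k [e [He ->]]]; exists k, (b * e); split; first by apply: srM.
    by rewrite mulrA.
have [s Hs] := Hn J HJ.
have gens : forall n, (n <= size s)%N -> exists N, forall i, (i < n)%N ->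
    exists b, A b /\ s`_i = b * a N.
  elim=> [|n IH] Hn'.
    by exists 0%N => i.
  have [N1 HN1] := IH (ltnW Hn').
  have [k [e [He Ek]]] : J s`_n by apply/Hs; apply: gen_in.
  have [c1 [Hd1 E1]] := monol N1 (maxn N1 k) (leq_maxl _ _).
  have [c2 [Hd2 E2]] := monol k (maxn N1 k) (leq_maxr _ _).
  exists (maxn N1 k) => i; rewrite ltnS leq_eqVlt => /orP [/eqP ->|Hi].
    by exists (e * c2); split; [apply: srM|rewrite Ek E2 mulrA].
  have [b [Hb Eb]] := HN1 i Hi.
  by exists (b * c1); split; [apply: srM|rewrite Eb E1 mulrA].
have [N HN] := gens (size s) (leqnn _).
exists N => m.
have : J (a m) by exists m, 1; split; [apply: sr1|rewrite mul1r].
move/Hs => [c [Hcc ->]].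
apply: (big_ind (fun x => exists e, A e /\ x = e * a N)).
- by exists 0; split; [apply: sr0|rewrite mul0r].
- move=> x y [e1 [He1 ->]] [e2 [He2 ->]]; exists (e1 + e2); split.
    by apply: srD.
  by rewrite mulrDl.
- move=> i _; have [b [Hb ->]] := HN i (ltn_ord i).
  by exists (c i * b); split; [apply: srM => //; apply: Hcc|rewrite mulrA].
Qed.

Lemma chk (K : fieldType) : {rmorphism K -> K}.
Proof. exact: idfun. Qed.

Lemma subR (K : fieldType) (R : nat -> K -> Prop)
  (Hreg : forall i, exists d, (2 <= d)%N /\ regular_local_dim (R i) d) i :
  is_subring (R i).
Proof. by have [d [_ [[H _] _]]] := Hreg i. Qed.

Lemma monoR (K : fieldType) (R : nat -> K -> Prop)
  (Hsub : forall i, (forall x, R i x -> R i.+1 x) /\ exists x, R i.+1 x /\ ~ R i x) i j x :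
  (i <= j)%N -> R i x -> R j x.
Proof.
move=> Hij; rewrite -(subnKC Hij); elim: (j - i)%N => [|n IH]; first by rewrite addn0.
by move=> Hx; rewrite addnS; apply: (Hsub _).1; apply: IH.
Qed.

Lemma nonunit_step (K : fieldType) (R : nat -> K -> Prop)
  (Hlqt : forall i, local_quadratic_transform (R i) (R i.+1))
  (Hsub : forall i, (forall x, R i x -> R i.+1 x) /\ exists x, R i.+1 x /\ ~ R i x) i a :
  nonunits (R i) a -> nonunits (R i.+1) a.
Proof.
move=> Ha; have [x [Hx [Hxs [q [Hq [Hmq HR']]]]]] := Hlqt i.
split; first by apply: (Hsub i).1; exact: Ha.1.
move=> [a0 /HR' [b [c [Hb [Hc [Hcq E]]]]]]; apply: Hcq.
have c0 : c != 0.
  apply/eqP => c0; move: E; rewrite c0 invr0 mulr0 => /eqP; rewrite invr_eq0.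
  by move/eqP => a00; move: a0; rewrite a00 eqxx.
have h : a * (b / c) = 1 by rewrite -E divff.
have -> : c = b * a.
  rewrite -[c]mul1r -h; field; exact: c0.
by apply: (Hq.1.2.2.2) => //; apply: Hmq.
Qed.

Lemma nonunit_mono (K : fieldType) (R : nat -> K -> Prop)
  (Hlqt : forall i, local_quadratic_transform (R i) (R i.+1))
  (Hsub : forall i, (forall x, R i x -> R i.+1 x) /\ exists x, R i.+1 x /\ ~ R i x) i j a :
  (i <= j)%N -> nonunits (R i) a -> nonunits (R j) a.
Proof.
move=> Hij; rewrite -(subnKC Hij); elim: (j - i)%N => [|n IH]; first by rewrite addn0.
by move=> Hx; rewrite addnS; apply: nonunit_step => //; apply: IH.
Qed.

Lemma xseq (K : fieldType) (R : nat -> K -> Prop)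
  (Hreg : forall i, exists d, (2 <= d)%N /\ regular_local_dim (R i) d)
  (Hlqt : forall i, local_quadratic_transform (R i) (R i.+1)) i :
  exists x, nonunits (R i) x /\ x != 0 /\ forall a, nonunits (R i) a -> R i.+1 (a / x).
Proof.
have [x [Hx [Hxs [q [Hq [Hmq HR']]]]]] := Hlqt i.
exists x; split => //; split.
  apply/eqP => x0; apply: Hxs; rewrite x0.
  exists 0%N, (fun _ => 0), (fun _ => 0); rewrite big_ord0; split => // _.
  have h : nonunits (R i) 0 by split; [apply: sr0; apply: subR | case=> /eqP].
  by [].
move=> a Ha; apply/HR'; exists (a / x), 1; split.
  by move=> C HC _ Hm; apply: Hm.
split; first by move=> C HC _ _; apply: sr1.
split; first by exact: Hq.2.1.
by rewrite divr1.
Qed.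

Lemma least (P : nat -> Prop) n : P n -> exists j, P j /\ forall j', P j' -> (j <= j')%N.
Proof.
suff H : forall m j, (j <= m)%N -> P j -> exists j0, P j0 /\ forall j', P j' -> (j0 <= j')%N.
  by apply: (H n n).
elim=> [|m IH] j Hj Pj.
  by move: Hj; rewrite leqn0 => /eqP e; exists j; split => // j' _; rewrite e.
case: (classic (exists j', (j' < j)%N /\ P j')) => [[j' [Hj' Pj']]|Hno].
  by apply: (IH j') => //; rewrite -ltnS; apply: leq_trans Hj.
exists j; split => // j' Pj'; rewrite leqNgt; apply/negP => Hlt.
by apply: Hno; exists j'.
Qed.

Lemma notnu (F : fieldType) (A : F -> Prop) y :
  A y -> ~ nonunits A y -> y != 0 /\ A y^-1.
Proof. by move=> Ay H; apply: NNPP => H'; apply: H. Qed.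

Lemma unit_nonu (F : fieldType) (A : F -> Prop) y e :
  A e -> y * e = 1 -> ~ nonunits A y.
Proof.
move=> Ae h [_ H]; apply: H.
have y0 : y != 0 by apply/eqP => y0; move: h; rewrite y0 mul0r => /eqP; rewrite eq_sym oner_eq0.
split => //; rewrite -[y^-1]mulr1 -h mulKf //.
Qed.

Lemma dvr_crit (K : fieldType) (S : K -> Prop) t :
  is_subring S -> S t -> t != 0 -> nonunits S t ->
  (forall y, nonunits S y -> exists s, S s /\ y = t * s) ->
  (forall a, S a -> a != 0 -> exists k, ~ exists s, S s /\ a = t ^+ k * s) ->
  is_DVR S.
Proof.
move=> HS St t0 tnu Hp Hb.
have Hnu : forall y, nonunits S y <-> exists s, S s /\ y = t * s.
  move=> y; split; first exact: Hp.
  move=> [s [Ss ->]]; split; first by apply: srM.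
  move=> [ts0 Hinv]; apply: tnu.2; split => //.
  have s0 : s != 0 by apply/eqP => s0; move: ts0; rewrite s0 mulr0 eqxx.
  have -> : t^-1 = s * (t * s)^-1 by field; rewrite t0 s0.
  by apply: srM.
have Hloc : is_local S.
  split => //; split; [|split; [|split]].
  - by move=> x [].
  - by apply/Hnu; exists 0; split; [apply: sr0|rewrite mulr0].
  - move=> x y /Hnu [s1 [S1 ->]] /Hnu [s2 [S2 ->]]; apply/Hnu.
    by exists (s1 + s2); split; [apply: srD|rewrite mulrDr].
  - move=> a x Sa /Hnu [s [Ss ->]]; apply/Hnu.
    by exists (a * s); split; [apply: srM|rewrite mulrCA].
have Hdec : forall y, S y -> y != 0 ->
    exists j u, S u /\ ~ nonunits S u /\ y = t ^+ j * u.
  move=> y Sy y0; have [k Hk] := Hb y Sy y0.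
  elim: k Hk => [|k IH] Hk.
    by exfalso; apply: Hk; exists y; rewrite expr0 mul1r.
  case: (classic (exists s, S s /\ y = t ^+ k * s)) => [[s [Ss Es]]|Hn]; last exact: IH.
  case: (classic (nonunits S s)) => [/Hp [s' [Ss' Es']]|Hs].
    by exfalso; apply: Hk; exists s'; rewrite Es Es' exprSr mulrA.
  by exists k, s.
split => //; split; last by exists t.
move=> I HI.
case: (classic (exists y, I y /\ y != 0)) => [[y [Iy y0]]|Hno].
- pose P j := exists y u, I y /\ S u /\ ~ nonunits S u /\ y = t ^+ j * u.
  have [j Pj] : exists j, P j.
    have [j [u [Su [Hu E]]]] := Hdec y (HI.1 y Iy) y0.
    by exists j, y, u.
  have [j0 [[y0' [u0 [Iy0 [Su0 [Hu0 E0]]]]] Hmin]] := least Pj.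
  have [u00 Su0i] := notnu Su0 Hu0.
  exists (t ^+ j0) => x; rewrite ideal_gen1; split.
  + move=> Ix; case: (eqVneq x 0) => [->|x0].
      by exists 0; split; [apply: sr0|rewrite mul0r].
    have [jj [u [Su [Hu E]]]] := Hdec x (HI.1 x Ix) x0.
    have Hj : (j0 <= jj)%N by apply: Hmin; exists x, u.
    exists (t ^+ (jj - j0) * u); split; first by apply: srM => //; apply: srX.
    by rewrite E mulrAC -exprD subnK.
  + move=> [c [Sc ->]].
    have -> : c * t ^+ j0 = (c * u0^-1) * y0' by rewrite E0; field.
    by apply: HI.2.2.2 => //; apply: srM.
- exists 0 => x; rewrite ideal_gen1; split.
  + move=> Ix; exists 0; split; first by apply: sr0.
    rewrite mulr0; apply: NNPP => x0; apply: Hno; exists x; split => //.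
    by apply/eqP.
  + by move=> [c [_ ->]]; rewrite mulr0; exact: HI.2.1.
Qed.

Lemma core (K : fieldType) (R : nat -> K -> Prop)
  (Hreg : forall i, exists d, (2 <= d)%N /\ regular_local_dim (R i) d)
  (Hlqt : forall i, local_quadratic_transform (R i) (R i.+1))
  (Hsub : forall i, (forall x, R i x -> R i.+1 x) /\ exists x, R i.+1 x /\ ~ R i x)
  (L : fieldType) (f : K -> L) (D : L -> Prop) :
  (forall x y, f (x * y) = f x * f y) -> (forall x, f x = 0 -> x = 0) ->
  is_subring D ->
  (forall I, is_ideal D I -> exists s, forall x, I x <-> ideal_gen D s x) ->
  (forall x, (exists i, R i x) -> D (f x)) ->
  (forall x, nonunits (fun x => exists i, R i x) x -> nonunits D (f x)) ->
  is_DVR (fun x => exists i, R i x).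
Proof.
set S := fun x => exists i, R i x.
move=> fM f0 HD HDn HSD HnuD.
have HS : is_subring S.
  split; [|split; [|split]].
  - by exists 0%N; apply: sr0; apply: subR.
  - by exists 0%N; apply: sr1; apply: subR.
  - move=> x y [i Hx] [j Hy]; exists (maxn i j); apply: srB; first exact: subR.
      by apply: monoR Hx => //; apply: leq_maxl.
    by apply: monoR Hy => //; apply: leq_maxr.
  - move=> x y [i Hx] [j Hy]; exists (maxn i j); apply: srM; first exact: subR.
      by apply: monoR Hx => //; apply: leq_maxl.
    by apply: monoR Hy => //; apply: leq_maxr.
have HSnu : forall y, nonunits S y -> exists i, nonunits (R i) y.
  move=> y [[i Hy] Hn]; exists i; split => // [[y0 Hi]]; apply: Hn; split => //.
  by exists i.
have HSnu' : forall i y, nonunits (R i) y -> nonunits S y.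
  move=> i y Hy; split; first by exists i; exact: Hy.1.
  move=> [y0 [j Hj]]; have := nonunit_mono Hlqt Hsub (leq_maxl i j) Hy.
  move=> [_ H]; apply: H; split => //; apply: monoR Hj => //; apply: leq_maxr.
have fnz : forall x, x != 0 -> f x != 0.
  by move=> x x0; apply/eqP => /f0 /eqP; apply/negP.
pose xs i := proj1_sig (constructive_indefinite_description _ (xseq Hreg Hlqt i)).
have Hxs : forall i, nonunits (R i) (xs i) /\ xs i != 0 /\
    forall a, nonunits (R i) a -> R i.+1 (a / xs i).
  by move=> i; rewrite /xs; case: constructive_indefinite_description.
have chain : forall k, exists c, D c /\ f (xs k) = c * f (xs k.+1).
  move=> k; exists (f (xs k / xs k.+1)); split.
    apply: HSD; exists k.+2; apply: (Hxs k.+1).2.2.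
    by apply: nonunit_step => //; exact: (Hxs k).1.
  by rewrite -fM divfK //; exact: (Hxs k.+1).2.1.
have [N HN] := acc HD HDn (fun k => HSD _ (proj1 (HSnu' _ _ (Hxs k).1))) chain.
set t := xs N.
have t0 : t != 0 by exact: (Hxs N).2.1.
have tnu : nonunits S t by apply: (HSnu' N); exact: (Hxs N).1.
apply: (@dvr_crit K S t HS tnu.1 t0 tnu).
- move=> y /HSnu [i Hy]; set m := maxn i N.
  have Hym : nonunits (R m) y by apply: nonunit_mono Hy => //; apply: leq_maxl.
  have Htm : nonunits (R m) t by apply: nonunit_mono (Hxs N).1 => //; apply: leq_maxr.
  have xm0 : xs m != 0 := (Hxs m).2.1.
  set c := t / xs m.
  have Sc : S c by exists m.+1; apply: (Hxs m).2.2.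
  have [e [De Ee]] := HN m.
  have Ec : f c * e = 1.
    have Et : f t = f c * f (xs m) by rewrite -fM /c divfK.
    apply: (mulIf (fnz _ xm0)); rewrite mul1r {2}Ee Et mulrA [e * f c]mulrC //.
  have [c0 Sci] := notnu Sc (fun H => unit_nonu De Ec (HnuD _ H)).
  exists (y / xs m * c^-1); split.
    by apply: srM => //; exists m.+1; apply: (Hxs m).2.2.
  by rewrite /c; field; rewrite xm0 t0.
- move=> a Sa a0; apply: NNPP => Hall.
  have Hk : forall k, S (a / t ^+ k).
    move=> k; apply: NNPP => Hk; apply: Hall; exists k => [[s [Ss Es]]]; apply: Hk.
    have tk0 : t ^+ k != 0 by apply: expf_neq0.
    by rewrite Es mulrC mulKf.
  have ch : forall k, exists c, D c /\ f (a / t ^+ k) = c * f (a / t ^+ k.+1).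
    move=> k; exists (f t); split; first by apply: HSD; exact: tnu.1.
    rewrite -fM exprS; congr f; field.
    by rewrite expf_neq0 // t0.
  have [M HM] := acc HD HDn (fun k => HSD _ (Hk k)) ch.
  have [e [De Ee]] := HM M.+1.
  have [_ [_ Ef]] : exists c, c = f t /\ f (a / t ^+ M) = f t * f (a / t ^+ M.+1).
    exists (f t); split => //; rewrite -fM exprS; congr f; field; by rewrite expf_neq0 // t0.
  have nz : a / t ^+ M.+1 != 0 by rewrite mulf_neq0 // invr_neq0 // expf_neq0.
  have Ec : f t * e = 1.
    apply: (mulIf (fnz _ nz)); rewrite mul1r {2}Ee Ef mulrA [e * _]mulrC //.
  by apply: (unit_nonu De Ec); apply: HnuD.
Qed.

Theorem corollary3p9 (K : fieldType) (R : nat -> K -> Prop)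
  (Hreg : forall i, exists d, (2 <= d)%N /\ regular_local_dim (R i) d)
  (Hlqt : forall i, local_quadratic_transform (R i) (R i.+1))
  (Hsub : forall i, (forall x, R i x -> R i.+1 x) /\ exists x, R i.+1 x /\ ~ R i x) :
  let S := fun x => exists i, R i x in
  (dominated_by_DVR S <-> is_DVR S) /\ (is_DVR S <-> noetherian S).
Proof.
move=> S.
have pid_noeth : forall (F : fieldType) (A : F -> Prop), principal_ideal_ring A ->
    forall I, is_ideal A I -> exists s, forall x, I x <-> ideal_gen A s x.
  by move=> F A HA I HI; have [g Hg] := HA I HI; exists [:: g].
split; split.
- move=> [L [f [D [HD [HSD HnuD]]]]].
  apply: (@core K R Hreg Hlqt Hsub L f D).
  + by move=> x y; rewrite rmorphM.
  + by move=> x /eqP; rewrite fmorph_eq0 => /eqP.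
  + exact: HD.1.1.
  + exact: pid_noeth HD.2.1.
  + exact: HSD.
  + by move=> x Hx; apply/(HnuD x Hx.1).
- move=> HS; exists K, idfun, S; split => //; split => // x Sx; split => //.
- move=> HS; split; first exact: HS.1.1.
  exact: pid_noeth HS.2.1.
- move=> [HS HSn].
  apply: (@core K R Hreg Hlqt Hsub K (fun x => x) S) => //.
Qed.
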